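(* Let $H_{KR}=[I_{10}\ M_{KR}]$ be the $10\times51$ binary matrix whose last 41 columns are, in order, the hexadecimal columns 1B6, 193, 1CC, 187, 1F6, F7, 16E, 140, 3C, 296, 22F, 303, 381, 365, 11D, 1A3, 274, 2F2, 254, 56, F, 41, 357, 208, 34, 329, 28D, 31D, 3D5, 129, 3D7, B7, 3EC, 2E2, 23C, AD, 34E, 155, 2E6, 371, D4 (10-bit binary, most significant bit on top). Then every vector of $\mathbb{F}_2^{10}$ equals the sum of three (distinct) columns of $H_{KR}$.
   Context: $I_{10}$ denotes the $10\times10$ identity matrix whose leftmost column is $(1,0,\dots,0)^T$. *)

(* Defs.v *)
From mathcomp Require Import all_boot all_order all_algebra.
Set Implicit Arguments. Unset Strict Implicit. Unset Printing Implicit Defensive.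
Import GRing.Theory.
Local Open Scope ring_scope.

Definition MKR_hex : seq nat :=
  [:: 0x1B6; 0x193; 0x1CC; 0x187; 0x1F6; 0xF7; 0x16E; 0x140; 0x3C; 0x296;
      0x22F; 0x303; 0x381; 0x365; 0x11D; 0x1A3; 0x274; 0x2F2; 0x254; 0x56;
      0xF; 0x41; 0x357; 0x208; 0x34; 0x329; 0x28D; 0x31D; 0x3D5; 0x129;
      0x3D7; 0xB7; 0x3EC; 0x2E2; 0x23C; 0xAD; 0x34E; 0x155; 0x2E6; 0x371;
      0xD4]%N.

(* Bit of a 10-bit number h at row i (row 0 = top = most significant bit). *)
Definition hex_bit (h : nat) (i : 'I_10) : bool := odd (h %/ 2 ^ (9 - i)).

Definition H_KR : 'M['F_2]_(10, 51) :=
  \matrix_(i < 10, j < 51)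
    if (j < 10)%N then (i == j :> nat)%:R
    else (hex_bit (nth 0%N MKR_hex (j - 10)) i)%:R.

(* Main.v *)
Require Import Defs.
From mathcomp Require Import all_boot all_order all_algebra.
Local Open Scope ring_scope.

Definition cc (j : nat) : nat :=
  if (j < 10)%N then (2 ^ (9 - j))%N else nth 0%N MKR_hex (j - 10).

Definition tbl : seq (nat * nat * nat) := [:: (0,6,33); (1,10,41); (0,28,29); (0,1,21); (4,5,34); (0,15,27); (0,13,22); (0,30,33); (0,34,44); (0,9,33); (0,8,33); (0,16,23); (0,7,33); (0,2,36); (0,17,46); (0,4,20); (4,7,34); (0,15,48); (0,11,22); (0,18,20); (0,3,28); (0,15,43); (0,2,19); (0,17,32); (0,5,33); (0,12,38); (0,14,42); (0,12,40); (0,4,44); (0,1,37); (0,21,24); (0,16,49); (0,12,42); (0,14,40); (0,22,25); (0,14,38); (0,47,49); (0,17,23); (0,27,50); (0,6,20); (0,4,33); (0,1,35); (0,21,39); (0,7,20); (0,5,44); (0,8,20); (0,9,20); (1,16,31); (0,23,47); (0,17,49); (0,48,50); (0,30,44); (0,3,26); (0,26,31); (0,43,50); (0,10,22); (0,7,44); (0,16,32); (0,36,41); (0,19,45); (0,33,34); (0,9,44); (0,8,44); (0,5,20); (0,26,34); (1,9,17); (0,19,50); (0,17,21); (0,5,28); (0,27,41); (0,11,38); (0,16,35); (0,3,33); (0,31,33); (0,24,32); (0,45,48); (0,23,39); (0,12,22); (0,1,46); (0,25,42); (0,7,28); (0,41,48); (0,13,38); (0,24,46); (0,4,26); (0,9,28);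 (0,8,28); (0,1,32); (0,39,49); (0,36,50); (0,10,42); (0,28,30); (0,6,28); (0,17,37); (0,29,33); (0,27,45); (0,28,34); (0,10,40); (0,2,43); (0,10,38); (0,5,26); (0,1,23); (0,2,48); (0,39,46); (0,18,28); (0,17,35); (0,29,44); (0,13,42); (0,24,49); (0,16,21); (0,20,31); (0,3,20); (0,7,26); (0,1,49); (0,2,27); (0,16,37); (0,4,28); (0,9,26); (0,8,26); (0,14,22); (0,23,24); (0,20,29); (0,15,36); (0,26,30); (0,3,44); (0,31,44); (0,32,39); (0,11,42); (0,28,50); (0,1,22); (0,12,46); (0,15,26); (0,13,21); (0,6,36); (0,5,19); (0,14,49); (0,2,33); (0,7,36); (0,25,35); (0,41,44); (0,9,36); (1,12,31); (0,11,37); (0,8,36); (0,11,21); (0,44,45); (0,7,19); (0,14,23); (0,8,19); (0,17,38); (1,4,10); (0,9,19); (0,20,41); (0,19,30); (0,13,37); (0,12,32); (0,22,24); (0,5,36); (0,6,19); (0,10,35); (0,21,25); (0,14,32); (0,3,43); (0,15,28); (0,27,29); (0,33,45); (0,3,48); (0,31,48); (0,22,39); (0,12,23); (0,18,19); (0,10,37); (0,17,42); (0,4,36); (0,13,35); (0,2,20); (0,29,48); (0,18,36); (0,3,27); (0,27,31); (0,29,43); (0,10,21); (0,4,19); (1,9,10); (0,14,46); (0,16,40); (0,11,35); (0,16,38); (0,2,44); (0,12,49); (0,25,37); (0,33,41); (0,19,29); (0,17,22); (0,4,43); (0,26,41); (0,11,32); (0,39,42); (0,4,48); (0,10,49); (0,24,38);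 (0,13,46); (0,24,40); (0,15,44); (0,31,36); (0,3,36); (0,18,27); (0,12,21); (0,13,32); (0,12,37); (0,4,27); (0,10,23); (0,2,28); (0,1,38); (0,3,19); (0,1,40); (0,15,20); (0,26,45); (0,18,48); (0,29,36); (0,33,50); (0,11,46); (0,18,43); (0,14,35); (0,8,43); (0,10,32); (0,5,27); (0,9,43); (0,8,48); (0,12,35); (0,7,43); (0,9,48); (0,44,50); (0,30,48); (0,6,43); (0,14,37); (0,1,42); (0,25,46); (0,6,48); (0,16,22); (0,8,27); (0,24,42); (0,5,43); (0,9,27); (0,2,26); (0,14,21); (0,5,48); (1,9,14); (0,10,46); (0,28,45); (0,6,27); (0,20,50); (0,38,39); (0,27,30); (0,39,40); (0,15,33); (9,10,41); (0,2,22); (0,9,21); (0,40,50); (0,14,27); (0,11,19); (0,20,39); (0,7,21); (0,1,33); (0,4,35); (0,13,36); (0,6,21); (0,21,30); (0,5,37); (0,3,46); (0,31,46); (0,14,48); (0,13,19); (0,30,37); (0,5,21); (0,14,43); (0,6,37); (0,31,32); (0,3,32); (0,29,46); (0,7,37); (0,16,26); (0,15,42); (0,9,37); (0,34,35); (0,11,36); (0,8,37); (0,10,19); (0,6,35); (0,15,38); (0,4,21); (0,23,31); (0,3,23); (0,30,35); (0,29,49); (0,9,35); (0,34,37); (0,12,48); (0,8,35); (0,22,45); (0,7,35); (0,12,43); (0,1,20); (0,31,49); (0,3,49); (0,20,24); (0,23,29); (0,17,26); (0,19,25); (0,22,41); (0,21,34); (0,42,50); (0,5,35); (0,16,28); (0,10,36);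 (0,1,44); (0,4,37); (0,12,27); (0,18,21); (1,9,31); (0,12,36); (0,21,31); (0,3,21); (0,10,27); (0,4,23); (0,6,46); (0,5,32); (0,17,33); (0,24,28); (0,7,46); (0,29,37); (0,8,46); (0,18,49); (1,30,31); (0,9,46); (0,10,48); (0,4,49); (0,16,44); (0,7,32); (0,1,28); (0,2,38); (0,9,32); (0,2,40); (0,30,32); (0,18,23); (0,12,19); (0,41,42); (0,31,37); (0,3,37); (0,5,46); (0,6,32); (0,14,19); (0,5,49); (0,38,41); (0,32,34); (0,9,23); (0,13,43); (0,16,33); (0,8,23); (0,31,35); (0,3,35); (0,23,30); (0,18,32); (0,2,42); (0,6,23); (0,4,46); (0,17,20); (0,9,49); (0,11,43); (0,18,46); (0,8,49); (0,1,26); (0,5,23); (0,15,22); (0,4,32); (0,38,45); (0,6,49); (0,20,47); (0,14,36); (0,17,44); (0,28,39); (0,30,49); (0,29,35); (0,9,22); (0,29,40); (0,14,26); (0,2,21); (0,35,45); (0,7,22); (0,15,49); (4,7,25); (0,16,48); (0,6,22); (0,10,44); (0,19,24); (0,16,43); (0,1,36); (0,22,30); (0,13,33); (0,24,36); (0,5,22); (0,15,23); (4,5,25); (0,31,38); (0,3,38); (0,1,19); (0,3,40); (0,12,28); (0,10,20); (0,46,50); (0,11,33); (0,16,27); (0,2,37); (0,35,41); (0,25,44); (0,15,32); (0,4,22); (0,14,28); (1,14,47); (0,36,39); (0,49,50); (0,17,48); (0,27,47); (0,13,20); (0,2,35); (0,37,41); (0,25,33); (0,3,42); (0,31,42); (0,21,45);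 (0,11,44); (0,37,45); (0,23,50); (0,17,27); (0,47,48); (0,21,41); (0,22,34); (1,9,41); (0,43,47); (0,12,26); (0,15,46); (0,29,42); (0,13,44); (0,11,20); (0,18,22); (0,10,33); (0,19,39); (0,22,31); (0,3,22); (0,10,26); (0,19,47); (0,12,33); (0,5,38); (0,41,49); (0,5,40); (0,23,45); (0,37,50); (0,14,44); (0,39,43); (0,4,42); (0,17,36); (0,2,46); (0,39,48); (0,18,42); (0,7,38); (0,23,41); (0,7,40); (0,9,38); (0,8,40); (0,9,40); (0,2,32); (0,30,40); (0,14,20); (0,30,38); (0,27,39); (0,45,49); (0,6,38); (0,15,35); (0,6,40); (0,32,41); (0,34,38); (0,1,43); (0,12,20); (0,6,42); (0,2,23); (0,1,48); (0,11,26); (0,7,42); (0,18,38); (0,15,37); (0,18,40); (1,31,45); (0,9,42); (0,8,42); (0,24,27); (0,12,44); (0,2,49); (0,1,27); (0,13,26); (0,15,21); (0,4,38); (1,9,15); (0,4,40); (0,16,19); (0,41,46); (0,32,45); (0,24,48); (0,5,42); (0,35,50); (0,14,33); (0,24,43); (2,28,50); (0,3,31); (0,38,40); (0,8,9); (0,43,48); (0,7,9); (0,7,8); (0,6,30); (0,18,34); (0,6,9); (0,6,8); (0,7,30); (0,6,7); (0,8,30); (0,9,30); (1,31,46); (0,27,43); (0,5,9); (0,5,8); (0,20,44); (0,4,34); (0,10,25); (0,3,29); (0,29,31); (0,5,6); (0,32,46); (0,41,45); (0,19,36); (0,4,18); (0,1,24); (0,21,37); (0,5,30); (0,26,28); (0,4,9);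 (0,4,8); (0,15,50); (0,4,7); (0,10,11); (0,32,49); (0,20,33); (0,4,6); (0,1,39); (0,21,35); (0,23,46); (0,5,18); (0,2,45); (0,16,17); (0,4,30); (0,4,5); (0,10,13); (0,23,32); (0,18,30); (0,6,18); (0,9,34); (0,8,34); (0,2,41); (0,7,18); (0,38,42); (0,12,14); (0,16,47); (0,6,34); (0,9,18); (0,8,18); (0,46,49); (0,1,17); (0,3,9); (0,3,8); (0,8,31); (0,3,7); (0,7,31); (0,5,29); (0,16,39); (0,3,6); (0,6,31); (0,32,37); (0,12,13); (0,23,35); (0,21,46); (0,30,31); (0,3,30); (0,3,5); (0,5,31); (0,7,29); (0,37,46); (0,2,50); (0,1,47); (0,22,40); (0,9,29); (0,35,49); (0,29,30); (0,15,45); (0,20,26); (0,28,33); (0,17,24); (0,6,29); (0,11,12); (0,3,4); (0,4,31); (0,29,34); (0,41,50); (0,19,27); (0,11,14); (0,21,23); (0,35,46); (0,28,44); (0,17,39); (0,18,29); (0,36,48); (0,37,49); (0,22,42); (0,1,16); (0,12,25); (0,19,48); (0,13,14); (0,21,49); (0,16,24); (0,3,34); (0,31,34); (0,4,29); (0,2,15); (0,23,37); (0,45,50); (0,10,12); (0,20,28); (0,3,18); (0,18,31); (0,32,35); (0,27,36); (0,32,40); (0,2,9); (0,2,8); (0,34,41); (0,2,7); (0,33,36); (0,26,27); (0,1,13); (0,2,6); (0,23,42); (0,25,39); (0,18,41); (0,12,17); (0,4,45); (0,11,24); (0,2,30); (0,2,5); (0,18,45); (0,26,48); (0,1,11); (0,3,50);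 (0,31,50); (0,26,43); (0,4,41); (0,14,16); (0,12,47); (0,13,24); (0,38,46); (0,22,37); (0,42,49); (0,19,33); (0,10,39); (0,2,4); (0,15,29); (0,12,16); (0,1,25); (0,38,49); (0,6,45); (0,27,28); (0,5,41); (0,22,35); (0,7,45); (0,19,44); (0,10,24); (0,9,45); (1,31,42); (0,13,39); (0,8,45); (0,23,38); (0,36,44); (0,23,40); (0,7,41); (0,2,34); (0,8,41); (0,1,10); (0,3,15); (0,30,41); (0,19,20); (0,11,39); (0,32,42); (0,2,18); (0,5,45); (0,24,25); (0,6,41); (0,2,3); (0,2,31); (0,19,28); (0,15,34); (0,5,50); (0,35,42); (0,11,47); (0,13,17); (0,37,38); (0,20,48); (0,37,40); (0,15,18); (0,1,12); (0,16,25); (0,27,44); (0,22,46); (0,7,50); (0,12,24); (0,13,47); (0,11,17); (0,21,40); (0,9,50); (0,2,29); (0,4,15); (0,10,16); (0,28,36); (0,44,48); (0,30,50); (0,6,50); (0,20,27); (0,43,44); (0,14,39); (0,34,50); (0,29,41); (0,19,26); (0,10,47); (0,22,23); (0,12,39); (4,23,25); (0,5,15); (0,18,50); (0,13,16); (0,33,43); (0,14,24); (0,31,45); (0,3,45); (0,33,48); (0,21,42); (0,22,49); (0,37,42); (4,25,49); (0,7,15); (0,4,50); (0,8,15); (0,1,14); (0,3,41); (0,15,30); (0,26,36); (0,27,33); (0,29,45); (0,35,38); (0,11,16); (0,35,40); (0,6,15); (0,3,17); (0,1,9); (0,1,8); (0,28,32); (0,1,7); (0,26,49); (0,20,35); (0,2,13);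 (0,1,6); (0,4,39); (0,42,48); (0,21,33); (0,22,36); (0,5,24); (0,25,45); (0,1,30); (0,1,5); (0,23,26); (0,24,30); (0,2,11); (0,25,41); (0,3,47); (0,17,29); (0,19,22); (0,12,50); (0,7,24); (0,28,46); (0,10,45); (0,9,24); (0,34,39); (0,27,42); (0,8,24); (0,1,4); (0,6,39); (0,14,50); (0,2,25); (0,11,41); (0,27,40); (0,30,39); (0,27,38); (0,9,39); (0,24,34); (0,13,45); (0,8,39); (0,20,21); (0,7,39); (0,3,16); (0,16,31); (0,13,41); (0,23,28); (0,20,37); (0,38,48); (0,1,34); (0,40,43); (0,2,10); (0,38,43); (0,16,29); (0,5,39); (0,26,46); (0,12,15); (0,1,18); (0,4,24); (0,11,45); (0,21,44); (0,1,3); (0,1,31); (0,8,17); (0,19,38); (0,7,17); (0,5,47); (0,33,46); (0,11,50); (0,6,17); (0,28,37); (0,20,23); (0,24,29); (0,2,12); (0,44,49); (0,4,16); (0,17,30); (0,5,17); (0,7,47); (0,16,18); (0,13,50); (0,9,47); (1,9,28); (0,1,29); (0,8,47); (0,36,38); (0,23,44); (0,16,34); (0,14,45); (0,24,31); (0,3,24); (0,20,49); (0,32,33); (0,4,17); (0,12,45); (0,10,50); (0,22,43); (0,11,15); (4,25,48); (0,6,16); (0,22,48); (0,31,39); (0,3,39); (0,7,16); (0,32,44); (0,8,16); (0,23,33); (1,20,31); (0,9,16); (0,13,15); (4,23,34); (0,44,46); (0,22,27); (0,17,34); (0,4,47); (0,2,14); (0,21,26); (0,20,32); (0,33,49); (0,19,42);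 (0,12,41); (0,17,18); (0,28,35); (0,5,16); (0,29,39); (0,1,2); (0,28,38); (0,10,34); (0,4,25); (0,39,45); (0,8,13); (0,9,13); (0,23,43); (0,13,30); (0,22,33); (0,10,18); (0,19,37); (0,3,12); (0,12,31); (0,21,36); (0,6,13); (0,36,37); (0,8,11); (0,9,11); (0,43,49); (0,17,50); (0,19,21); (0,4,10); (0,5,13); (0,26,42); (0,15,16); (0,12,29); (0,6,11); (0,11,30); (0,2,24); (0,39,41); (0,18,25); (0,14,29); (0,8,25); (0,9,25); (0,26,40); (0,35,36); (0,27,32); (0,5,10); (0,4,13); (0,46,48); (0,2,39); (0,24,41); (0,6,25); (0,25,30); (0,1,45); (0,20,22); (0,11,18); (0,24,45); (0,32,48); (0,7,10); (0,4,11); (0,8,10); (0,32,43); (0,3,14); (0,1,41); (0,28,42); (0,10,30); (0,16,50); (0,13,18); (0,27,46); (0,22,44); (0,6,10); (0,19,35); (0,2,17); (0,19,32); (0,14,34); (0,12,30); (0,6,12); (0,11,29); (0,13,31); (0,3,13); (0,7,12); (0,24,50); (0,14,18); (0,35,43); (1,31,36); (0,9,12); (0,8,12); (0,35,48); (0,42,44); (0,13,29); (0,11,31); (0,3,11); (0,1,50); (0,2,47); (0,4,14); (1,19,31); (0,19,46); (0,16,41); (0,32,36); (0,27,35); (0,5,12); (0,33,38); (0,15,39); (0,33,40); (0,10,29); (0,21,43); (0,25,31); (0,3,25); (0,33,42); (0,21,48); (0,5,14); (0,19,49); (0,23,36); (0,38,44); (0,15,24); (0,40,44); (0,4,12); (0,17,45);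 (0,2,16); (0,27,37); (0,12,18); (0,21,27); (0,7,14); (0,19,23); (0,8,14); (0,22,26); (0,3,10); (0,1,15); (0,12,34); (0,14,30); (0,20,38); (0,37,48); (0,36,49); (0,39,50); (0,6,14); (0,37,43)].

Definition code (s : seq bool) : nat :=
  foldl (fun acc (x : bool) => (acc * 2 + x)%N) 0%N s.

Definition Q (s : seq bool) : bool :=
  let w := nth (0,0,0)%N tbl (code s) in
  [&& (w.1.1 < 51)%N, (w.1.2 < 51)%N, (w.2 < 51)%N,
      w.1.1 != w.1.2, w.1.1 != w.2, w.1.2 != w.2 &
      all (fun t => odd (cc w.1.1 %/ 2 ^ (9 - t)) (+) odd (cc w.1.2 %/ 2 ^ (9 - t))
                          (+) odd (cc w.2 %/ 2 ^ (9 - t)) == nth false s t) (iota 0 10)].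

Lemma allQ b0 b1 b2 b3 b4 b5 b6 b7 b8 b9 : Q [:: b0; b1; b2; b3; b4; b5; b6; b7; b8; b9].
Proof.
case: b0; case: b1; case: b2; case: b3; case: b4; case: b5; case: b6; case: b7; case: b8; case: b9;
vm_compute; reflexivity.
Qed.

Lemma F2e (x : 'F_2) : (x == 1)%:R = x.
Proof. by case: x => [[|[|n]] //= Hn]; apply/val_inj. Qed.
Lemma F2add (x y z : bool) : x%:R + y%:R + z%:R = (x (+) y (+) z)%:R :> 'F_2.
Proof. by case: x; case: y; case: z; apply/val_inj. Qed.
Lemma idchk : all (fun i => all (fun a => (i == a) == odd (2 ^ (9 - a) %/ 2 ^ (9 - i))) (iota 0 10)) (iota 0 10).
Proof. by vm_compute. Qed.

Lemma Hcol (a : nat) (i : 'I_10) : (a < 51)%N ->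
  H_KR i (inord a) = (odd (cc a %/ 2 ^ (9 - i)))%:R.
Proof.
move=> Ha; rewrite mxE inordK // /cc /hex_bit; case: ifP => // La.
have H1 := allP idchk i; rewrite mem_iota leq0n add0n ltn_ord in H1.
have H2 := allP (H1 isT) a; rewrite mem_iota leq0n add0n La in H2.
by rewrite (eqP (H2 isT)).
Qed.

Lemma Hcol2 (a : nat) (i : 'I_10) (j : 'I_1) : (a < 51)%N ->
  col (inord a) H_KR i j = (odd (cc a %/ 2 ^ (9 - i)))%:R.
Proof. by move=> Ha; rewrite mxE Hcol. Qed.

Lemma inord_neq (a b : nat) : (a < 51)%N -> (b < 51)%N -> a != b ->
  (inord a : 'I_51) != inord b.
Proof.
move=> Ha Hb; apply: contra => /eqP /(congr1 val) /=.
by rewrite !inordK // => ->.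
Qed.

Theorem lemma7p4 :
  forall v : 'cV['F_2]_10,
    exists i j k : 'I_51,
      [/\ i != j, i != k, j != k &
          col i H_KR + col j H_KR + col k H_KR = v].
Proof.
move=> v.
pose s := map (fun t => v (inord t) 0 == 1) (iota 0 10).
have HQ : Q s by apply: allQ.
move: HQ; rewrite /Q.
case: (nth _ _ _) => [[a b] c] /and5P [Ha Hb Hc Hab /andP [Hac /andP [Hbc Hall]]].
exists (inord a), (inord b), (inord c); split; try exact: inord_neq.
apply/matrixP => i j; rewrite ord1 [LHS]mxE [X in X + _ = _]mxE !Hcol2 // F2add.
have H3 := allP Hall i; rewrite mem_iota leq0n add0n ltn_ord in H3.
rewrite (eqP (H3 isT)).
rewrite /s (nth_map 0%N) ?size_iota // nth_iota // add0n.
by rewrite inord_val F2e.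
Qed.
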